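(* Let $S$ be a proper restriction semigroup, and let $\cdot$ and $\circ$ be its underlying left and right partial actions of $S/\sigma$ on $P(S)$. Then: (1) $S$ satisfies condition $\mathrm{(EP)^r}$: for all $s,t,u\in S$, if $s\,\sigma\, tu$ then there exists $v\in S$ with $t^+s=tv$ and $u\,\sigma\, v$ — if and only if $\circ$ is strong; (2) $S$ satisfies condition $\mathrm{(EP)^l}$: for all $s,t,u\in S$, if $s\,\sigma\, ut$ then there exists $v\in S$ with $st^*=vt$ and $u\,\sigma\, v$ — if and only if $\cdot$ is strong.
   Context: A restriction semigroup is an algebra $(S,\cdot,{}^*,{}^+)$ where $(S,\cdot)$ is a semigroup and the identities $xx^*=x$, $x^*y^*=y^*x^*$, $(xy^* )^*=x^*y^*$, $x^*y=y(xy)^*$, $x^+x=x$, $x^+y^+=y^+x^+$, $(x^+y)^+=x^+y^+$, $xy^+=(xy)^+x$, $(x^+)^*=x^+$, $(x^* )^+=x^*$ hold. $P(S)=\{x^*\colon x\in S\}$ is the semilattice of projections; $\sigma$ is the least congruence identifying all projections; $S$ is proper if ($a^*=b^*$, $a\,\sigma\,b$) $\Rightarrow a=b$ and ($a^+=b^+$, $a\,\sigma\,b$) $\Rightarrow a=b$. Underlying partial actions: for $t\in S/\sigma$ and $e\in P(S)$, $t\cdot e$ is defined iff there is $a\in t$ with $a^*\ge e$, and then $t\cdot e=(ae)^+$; $e\circ t$ is defined iff there is $a\in t$ with $a^+\ge e$... equivalently $e\circ t$ is defined iff $e=t\cdot f$ for some $f$, and then $e\circ t=f$. A left partial action $\cdot$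 of a monoid $T$ is strong if for all $s,t\in T$ and $y$: whenever $t\cdot y$ and $(st)\cdot y$ are defined, $s\cdot(t\cdot y)$ is defined. A right partial action $\circ$ is strong if whenever $y\circ s$ and $y\circ(st)$ are defined, $(y\circ s)\circ t$ is defined. *)

(* Defs.v *)
Set Implicit Arguments.

Section Restriction.
Variable S : Type.
Variable mul : S -> S -> S.
Variable st : S -> S.
Variable pl : S -> S.

Definition is_restriction_semigroup : Prop :=
  (forall x y z, mul (mul x y) z = mul x (mul y z)) /\
  (forall x, mul x (st x) = x) /\
  (forall x y, mul (st x) (st y) = mul (st y) (st x)) /\
  (forall x y, st (mul x (st y)) = mul (st x) (st y)) /\
  (forall x y, mul (st x) y = mul y (st (mul x y))) /\
  (forall x, mul (pl x) x = x) /\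
  (forall x y, mul (pl x) (pl y) = mul (pl y) (pl x)) /\
  (forall x y, pl (mul (pl x) y) = mul (pl x) (pl y)) /\
  (forall x y, mul x (pl y) = mul (pl (mul x y)) x) /\
  (forall x, st (pl x) = pl x) /\
  (forall x, pl (st x) = st x).

Definition proj (e : S) : Prop := exists x, e = st x.

Definition proj_le (e f : S) : Prop := e = mul e f.

Definition is_congruence (R : S -> S -> Prop) : Prop :=
  (forall a, R a a) /\ (forall a b, R a b -> R b a) /\
  (forall a b c, R a b -> R b c -> R a c) /\
  (forall a b c, R a b -> R (mul c a) (mul c b)) /\
  (forall a b c, R a b -> R (mul a c) (mul b c)).

Definition sigma (a b : S) : Prop :=
  forall R, is_congruence R -> (forall e f, proj e -> proj f -> R e f) -> R a b.

Definition proper : Prop :=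
  (forall a b, st a = st b -> sigma a b -> a = b) /\
  (forall a b, pl a = pl b -> sigma a b -> a = b).

(* Elements of S/sigma are represented by elements c of S (the class of c);
   "a in t" means sigma a c.
   lact c e f  :<->  (class of c) . e is defined and equals f,
   i.e. e is a projection, there is a in the class of c with a^* >= e,
   and f = (a e)^+. *)
Definition lact (c e f : S) : Prop :=
  proj e /\ exists a, sigma a c /\ proj_le e (st a) /\ f = pl (mul a e).

(* ract e c f  :<->  e o (class of c) is defined and equals f,
   i.e. f is a projection with (class of c) . f = e. *)
Definition ract (e c f : S) : Prop := proj e /\ lact c f e.

Definition lact_strong : Prop :=
  forall s t y, proj y ->
    (exists f, lact t y f) -> (exists g, lact (mul s t) y g) ->
    forall f, lact t y f -> exists h, lact s f h.

Definition ract_strong : Prop :=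
  forall s t y, proj y ->
    (exists f, ract y s f) -> (exists g, ract y (mul s t) g) ->
    forall f, ract y s f -> exists h, ract f t h.

Definition EP_r : Prop :=
  forall s t u, sigma s (mul t u) ->
    exists v, mul (pl t) s = mul t v /\ sigma u v.

Definition EP_l : Prop :=
  forall s t u, sigma s (mul u t) ->
    exists v, mul s (st t) = mul v t /\ sigma u v.

End Restriction.

(* Main.v *)
Require Import Defs.

Theorem proposition3p7 (S : Type) (mul : S -> S -> S) (st pl : S -> S)
  (HS : is_restriction_semigroup mul st pl) (Hprop : proper mul st pl) :
  (EP_r mul st pl <-> ract_strong mul st pl) /\
  (EP_l mul st <-> lact_strong mul st pl).
Proof.
  destruct HS as (A & H1 & H2 & H3 & H4 & H5 & H6 & H7 & H8 & H9 & H10).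
  destruct Hprop as [Pst Ppl].
  assert (stst : forall x, st (st x) = st x).
  { intro x. transitivity (st (pl (st x))). rewrite H10; reflexivity. rewrite H9, H10; reflexivity. }
  assert (plpl : forall x, pl (pl x) = pl x).
  { intro x. transitivity (pl (st (pl x))). rewrite H9; reflexivity. rewrite H10, H9; reflexivity. }
  assert (projE : forall e, proj st e -> st e = e /\ pl e = e).
  { intros e [x ->]. split; [apply stst | apply H10]. }
  assert (proj_st : forall x, proj st (st x)) by (intro x; exists x; reflexivity).
  assert (proj_pl : forall x, proj st (pl x)) by (intro x; exists (pl x); symmetry; apply H9).
  assert (idem : forall e, proj st e -> mul e e = e).
  { intros e [x ->]. rewrite <- H3. rewrite H1. reflexivity. }
  assert (comm : forall e f, proj st e -> proj st f -> mul e f = mul f e).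
  { intros e f [x ->] [y ->]. apply H2. }
  assert (pmul : forall e f, proj st e -> proj st f -> proj st (mul e f)).
  { intros e f [x ->] [y ->]. exists (mul x (st y)). symmetry; apply H3. }
  assert (stxe : forall x e, proj st e -> st (mul x e) = mul (st x) e).
  { intros x e [z ->]. apply H3. }
  assert (plex : forall x e, proj st e -> pl (mul e x) = mul e (pl x)).
  { intros x e [z ->]. rewrite <- (H10 z). apply H7. }
  assert (stle : forall x y, st (mul x y) = mul (st (mul x y)) (st y)).
  { intros x y. rewrite <- stxe by apply proj_st. rewrite A, H1. reflexivity. }
  assert (plle : forall x y, pl (mul x y) = mul (pl x) (pl (mul x y))).
  { intros x y. rewrite <- plex by apply proj_pl. rewrite <- A, H5. reflexivity. }
  assert (plxpl : forall x y, pl (mul x (pl y)) = pl (mul x y)).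
  { intros x y. rewrite H8. rewrite plex by apply proj_pl. rewrite comm by apply proj_pl.
    symmetry; apply plle. }
  assert (stsxy : forall x y, st (mul (st x) y) = st (mul x y)).
  { intros x y. rewrite H4. rewrite stxe by apply proj_st. rewrite comm by apply proj_st.
    symmetry; apply stle. }
  assert (sg_refl : forall a, sigma mul st a a) by (intros a R HR Hp; destruct HR as (Rr&_); apply Rr).
  assert (sg_sym : forall a b, sigma mul st a b -> sigma mul st b a)
    by (intros a b H R HR Hp; pose proof HR as HR'; destruct HR as (_&Rs&_); apply Rs; apply H; auto).
  assert (sg_trans : forall a b c, sigma mul st a b -> sigma mul st b c -> sigma mul st a c)
    by (intros a b c H H' R HR Hp; pose proof HR as HR'; destruct HR as (_&_&T&_); apply T with b; [apply H|apply H']; auto).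
  assert (sg_l : forall a b c, sigma mul st a b -> sigma mul st (mul c a) (mul c b))
    by (intros a b c H R HR Hp; pose proof HR as HR'; destruct HR as (_&_&_&Rl&_); apply Rl; apply H; auto).
  assert (sg_r : forall a b c, sigma mul st a b -> sigma mul st (mul a c) (mul b c))
    by (intros a b c H R HR Hp; pose proof HR as HR'; destruct HR as (_&_&_&_&Rr); apply Rr; apply H; auto).
  assert (sg_p : forall e f, proj st e -> proj st f -> sigma mul st e f)
    by (intros e f He Hf R HR Hp; apply Hp; auto).
  split; split.
  - intros HE s t y Hy _ [g Hg] f Hf.
    destruct Hf as (_ & Hfp & a & Ha & Hfa & Hya).
    destruct Hg as (_ & Hgp & c & Hc & Hgc & Hyc).
    unfold proj_le in *.
    destruct (HE c a t) as (v & Hv & Htv).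
    { apply sg_trans with (mul s t); [exact Hc | apply sg_r; apply sg_sym; exact Ha]. }
    set (b := mul (st a) v).
    exists (st (mul b g)). split; [exact Hfp|]. split; [apply proj_st|]. exists b.
    split.
    { apply sg_trans with v. apply sg_trans with (mul (pl v) v).
      apply sg_r, sg_p; auto. rewrite H5; apply sg_refl. apply sg_sym; exact Htv. }
    split.
    { unfold proj_le. rewrite (stxe _ _ Hgp).
      rewrite (A (st b) g (st b)), (comm g (st b)), <- (A (st b) (st b) g), (idem (st b)); auto. }
    assert (Bh : mul b (st (mul b g)) = mul b g).
    { rewrite (stxe _ _ Hgp), <- A, H1. reflexivity. }
    rewrite Bh.
    assert (Ey : mul (pl a) y = y).
    { rewrite Hya. rewrite <- plex by apply proj_pl. rewrite <- A, H5. reflexivity. }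
    assert (E1 : mul a (pl (mul b g)) = mul y a).
    { rewrite H8. f_equal. unfold b.
      rewrite (A (st a) v g), <- (A a (st a) (mul v g)), H1, <- (A a v g), <- Hv, (A (pl a) c g).
      rewrite (plex _ _ (proj_pl a)), <- Hyc. exact Ey. }
    assert (E2 : mul a f = mul y a).
    { destruct (projE f Hfp) as [_ Ef].
      transitivity (mul a (pl f)). rewrite Ef; reflexivity. rewrite H8, <- Hya. reflexivity. }
    assert (Q : pl (mul b g) = mul (st a) (pl (mul b g))).
    { rewrite (plle b g). unfold b. rewrite (plex v (st a) (proj_st a)). rewrite !A.
      rewrite <- (A (st a) (st a)), (idem (st a)) by auto. reflexivity. }
    transitivity (st (mul a f)).
    { rewrite (stxe _ _ Hfp). rewrite (comm (st a) f) by auto. exact Hfa. }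
    rewrite E2, <- E1. rewrite (stxe _ _ (proj_pl _)). symmetry; exact Q.
  - intros HR s0 t u Hs.
    set (y := mul (pl t) (pl s0)).
    assert (Hy : proj st y) by (apply pmul; auto).
    destruct (projE y Hy) as [Ys Yp].
    assert (Gen : forall x z, sigma mul st x z -> mul (pl x) y = y ->
                   ract mul st pl y z (st (mul y x))).
    { intros x z Hxz Hx. split; [exact Hy|]. split; [apply proj_st|]. exists x.
      split; [exact Hxz|]. split.
      - unfold proj_le. apply stle.
      - rewrite <- H4, Ys, (plex _ _ Hy), (comm y (pl x)), Hx by auto. reflexivity. }
    assert (Ft : ract mul st pl y t (st (mul y t))).
    { apply Gen. apply sg_refl. unfold y. rewrite <- A, idem by auto. reflexivity. }
    assert (Fs : ract mul st pl y (mul t u) (st (mul y s0))).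
    { apply Gen. exact Hs. unfold y.
      rewrite <- A, (comm (pl s0) (pl t)), A, (idem (pl s0)) by auto. reflexivity. }
    destruct (HR t u y Hy (ex_intro _ _ Ft) (ex_intro _ _ Fs) _ Ft)
      as (h & _ & Hhp & b & Hb & Hhb & Hfb).
    assert (Sbh : sigma mul st b (mul b h)).
    { apply sg_trans with (mul b (st b)). rewrite H1; apply sg_refl. apply sg_l, sg_p; auto. }
    exists (mul b h). split.
    2: { apply sg_trans with b. apply sg_sym; exact Hb. exact Sbh. }
    symmetry. apply Ppl.
    + rewrite <- (plxpl t (mul b h)), <- Hfb. rewrite <- H4, Ys. rewrite (plex _ _ Hy), H7.
      unfold y. rewrite A, (comm (pl s0) (pl t)), <- A, (idem (pl t)) by auto. reflexivity.
    + apply sg_trans with (mul t u).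
      { apply sg_l. apply sg_trans with b. apply sg_sym; exact Sbh. exact Hb. }
      apply sg_trans with s0. apply sg_sym; exact Hs.
      apply sg_trans with (mul (pl s0) s0). rewrite H5; apply sg_refl.
      apply sg_r, sg_p; auto.
  - intros HE s t y Hy _ [g Hg] f Hf.
    destruct Hf as (_ & a & Ha & Hya & ->).
    destruct Hg as (_ & b & Hb & Hyb & _).
    unfold proj_le in *.
    destruct (HE b a s) as (v & Hv & Hsv).
    { apply sg_trans with (mul s t); [exact Hb | apply sg_l; apply sg_sym; exact Ha]. }
    exists (pl (mul v (pl (mul a y)))). split; [apply proj_pl|]. exists v.
    split; [apply sg_sym; exact Hsv|]. split; [|reflexivity].
    unfold proj_le.
    assert (Hay : mul (st a) y = y).
    { rewrite <- comm by auto. symmetry; exact Hya. }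
    assert (Hby : mul (st b) y = y).
    { rewrite <- comm by auto. symmetry; exact Hyb. }
    assert (K: mul (st v) (mul a y) = mul a y).
    { rewrite H4. rewrite <- (A v a y). rewrite <- Hv. rewrite (A b (st a) y). rewrite Hay.
      rewrite stxe by exact Hy. rewrite Hby. rewrite A, idem by exact Hy. reflexivity. }
    pose proof (plex (mul a y) (st v) (proj_st v)) as P. rewrite K in P.
    rewrite (comm (pl (mul a y)) (st v)) by auto. exact P.
  - intros HL s0 t u Hs.
    set (y := mul (st s0) (st t)).
    assert (Hy : proj st y) by (apply pmul; auto).
    assert (Hf : lact mul st pl t y (pl (mul t y))).
    { split; [exact Hy|]. exists t. split; [apply sg_refl|]. split; [|reflexivity].
      unfold proj_le, y. rewrite A, idem; auto. }
    assert (Hg : lact mul st pl (mul u t) y (pl (mul s0 y))).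
    { split; [exact Hy|]. exists s0. split; [exact Hs|]. split; [|reflexivity].
      unfold proj_le, y. rewrite A, (comm (st t) (st s0)), <- A, idem; auto. }
    destruct (HL u t y Hy (ex_intro _ _ Hf) (ex_intro _ _ Hg) _ Hf) as (h & _ & c & Hc & Hfc & _).
    unfold proj_le in Hfc.
    exists (mul c (pl (mul t y))). split.
    2: { apply sg_trans with c. apply sg_sym; exact Hc.
         apply sg_trans with (mul c (st c)). rewrite H1; apply sg_refl. apply sg_l, sg_p; auto. }
    assert (E1 : mul (mul c (pl (mul t y))) t = mul c (mul t y)).
    { rewrite A. rewrite <- H8. destruct (projE y Hy) as [_ Ey]. rewrite Ey. reflexivity. }
    assert (E2 : mul s0 (st t) = mul s0 y). { unfold y. rewrite <- A, H1. reflexivity. }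
    rewrite E1, E2. symmetry. apply Pst.
    + rewrite <- stsxy.
      assert (K : mul (st c) (mul t y) = mul t y).
      { transitivity (mul (st c) (mul (pl (mul t y)) (mul t y))). rewrite H5; reflexivity.
        rewrite <- A. rewrite (comm (st c) (pl (mul t y))) by auto. rewrite <- Hfc. apply H5. }
      rewrite K. rewrite (stxe _ _ Hy), (stxe _ _ Hy). unfold y.
      rewrite (comm (st t) (mul (st s0) (st t))) by auto.
      rewrite (A (st s0) (st t) (st t)), (idem (st t)) by auto.
      rewrite <- (A (st s0) (st s0) (st t)), (idem (st s0)) by auto. reflexivity.
    + apply sg_trans with (mul u (mul t y)). apply sg_r; exact Hc.
      rewrite <- A. apply sg_r. apply sg_sym; exact Hs.
Qed.
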